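(* Let $p$ be an odd prime, $k\in\{-1,1\}$ and $q$ a positive integer. For every Legendre graph $L_{qp}^k(f,p)$ of order $qp$, the minimum degree is $\delta(L_{qp}^k(f,p))=q\frac{p-1}{2}-1$ and the maximum degree is $\Delta(L_{qp}^k(f,p))=q\frac{p-1}{2}$.
   Context: For an odd prime $p$ and an integer $a$ not divisible by $p$, $(a/p)$ denotes the Legendre symbol: $1$ if $a$ is a quadratic residue mod $p$, $-1$ otherwise. For $k\in\{-1,1\}$, a Legendre graph $L_n^k(f,p)$ of order $n$ is a simple graph on an $n$-element vertex set $V$ together with a bijection $f:V\to\{1,2,\dots,n\}$, whose edges are exactly the pairs $\{a,b\}$ of distinct vertices with $p\nmid f(a)+f(b)$ and $((f(a)+f(b))/p)=k$. *)

(* Defs.v *)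
From mathcomp Require Import all_boot all_order all_algebra.
Set Implicit Arguments. Unset Strict Implicit. Unset Printing Implicit Defensive.

(* Legendre symbol (a/p) for an odd prime p and p not dividing a:
   1 if a is a quadratic residue mod p, -1 otherwise. (Only used when ~~ (p %| a).) *)
Definition is_qr (a p : nat) : bool := [exists x : 'I_p, (x * x) %% p == a %% p].
Definition legendre (a p : nat) : int := if is_qr a p then 1%R else (-1)%R.

Definition legendre_adj (T : finType) (f : T -> nat) (p : nat) (k : int) : rel T :=
  fun a b => [&& a != b, ~~ (p %| f a + f b) & legendre (f a + f b) p == k].

Definition is_labelling (T : finType) (n : nat) (f : T -> nat) : Prop :=
  #|T| = n /\ injective f /\ (forall v, 1 <= f v <= n).

Definition degree (T : finType) (e : rel T) (v : T) : nat := #|[set w | e v w]|.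

Definition is_min_degree (T : finType) (e : rel T) (d : nat) : Prop :=
  (exists v, degree e v = d) /\ (forall v, d <= degree e v).
Definition is_max_degree (T : finType) (e : rel T) (d : nat) : Prop :=
  (exists v, degree e v = d) /\ (forall v, degree e v <= d).

(* Main.v *)
Require Import Defs.
From mathcomp Require Import all_boot all_order all_algebra zify.

Lemma count_periodic1 (H : pred nat) p m : (forall b, H (b + p) = H b) ->
  count H (iota m p) = count H (iota 0 p).
Proof.
move=> Hp; elim: m => // m IH; rewrite -IH.
case: p Hp {IH} => // p Hp.
rewrite -[p.+1]addn1 iotaD count_cat [in RHS]addn1 /=.
have -> : m.+1 + p = m + p.+1 by lia.
rewrite Hp; lia.
Qed.
Lemma count_periodic (H : pred nat) p m q : (forall b, H (b + p) = H b) ->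
  count H (iota m (q * p)) = q * count H (iota 0 p).
Proof.
move=> Hp; elim: q m => // q IH m.
by rewrite mulSn iotaD count_cat IH count_periodic1 // mulSn.
Qed.

Lemma count_shift_mod (G : pred nat) p a m q : 0 < p ->
  count (fun b => G ((a + b) %% p)) (iota m (q * p)) = q * count G (iota 0 p).
Proof.
move=> p0; rewrite count_periodic; last first.
  by move=> b; rewrite addnA modnDr.
congr (q * _).
have -> : count (fun b => G ((a + b) %% p)) (iota 0 p) =
  count (fun b => G (b %% p)) (iota (a + 0) p) by rewrite iotaDl count_map.
rewrite addn0.
rewrite (@count_periodic1 (fun b => G (b %% p))); last by move=> b; rewrite modnDr.
apply: eq_in_count => r; rewrite mem_iota => /andP[_ hr] /=.
by rewrite modn_small.
Qed.

Lemma count_drop1 (Q : pred nat) a s : uniq s ->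
  count (fun b => (b != a) && Q b) s + (Q a && (a \in s)) = count Q s.
Proof.
elim: s => [|x s IH] /=; first by rewrite andbF.
move=> /andP[xs us]; rewrite -IH // in_cons.
case: (eqVneq x a) xs => [<-|nx] xs /=.
  rewrite (negbTE xs) andbF; case: (Q x) => /=; lia.
lia.
Qed.

Lemma count_split (A B : pred nat) s :
  count (fun r => A r && B r) s + count (fun r => A r && ~~ B r) s = count A s.
Proof. elim: s => //= x s IH; case: (A x); case: (B x) => /=; lia. Qed.

Lemma sq_mod_eq p x y : prime p -> x <= y -> x * x = y * y %[mod p] ->
  (p %| y - x) || (p %| y + x).
Proof.
move=> pp xy /eqP; rewrite eq_sym eqn_mod_dvd; last by apply: leq_mul.
have -> : y * y - x * x = (y - x) * (y + x) by rewrite mulnBl !mulnDr; lia.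
by rewrite Euclid_dvdM.
Qed.

Lemma qr_count p : prime p -> odd p ->
  count (fun r => (r != 0) && is_qr r p) (iota 0 p) = (p - 1) %/ 2.
Proof.
move=> pp op.
have p1 : 1 < p by apply: prime_gt1.
set h := (p - 1) %/ 2.
have ph : p = 2 * h + 1.
  have e := odd_double_half p; rewrite op -muln2 /= in e; by rewrite /h -e subn1 /= mulnK // addnC mulnC.
set S := [seq x * x %% p | x <- iota 1 h].
have smalldvd : forall z, 0 < z < p -> ~~ (p %| z).
  move=> z /andP[z0 zp]; apply/negP => /dvdn_leq; move/(_ z0); lia.
rewrite -size_filter.
transitivity (size S); last by rewrite size_map size_iota.
apply: perm_size; apply: uniq_perm.
- by rewrite filter_uniq // iota_uniq.
- rewrite map_inj_in_uniq ?iota_uniq //.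
  have key : forall x y, x \in iota 1 h -> y \in iota 1 h -> x <= y ->
      x * x %% p = y * y %% p -> x = y.
    move=> x y; rewrite !mem_iota => /andP[x1 xh] /andP[y1 yh] xy e.
    case/orP: (@sq_mod_eq p x y pp xy e) => d.
      case: (posnP (y - x)) => [|yx]; first lia.
      move: d; rewrite (negbTE (smalldvd _ _)) //; lia.
    move: d; rewrite (negbTE (smalldvd _ _)) //; lia.
  move=> x y hx hy e; case: (leqP x y) => xy; first exact: key.
  by symmetry; apply: key => //; apply: ltnW.
- move=> r; rewrite mem_filter mem_iota add0n /=.
  apply/idP/idP.
    move=> /andP[/andP[r0 /existsP[x /eqP hx]] rp].
    rewrite (modn_small rp) in hx.
    have x0 : 0 < val x.
      rewrite lt0n; apply/negP => /eqP x0; move: hx; rewrite x0 mod0n => e.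
      by move: r0; rewrite -e.
    have xp : val x < p := ltn_ord x.
    apply/mapP; case: (leqP (val x) h) => xh.
      by exists (val x) => //; rewrite mem_iota; lia.
    exists (p - val x); first by rewrite mem_iota; lia.
    rewrite -hx.
    have -> : val x * val x = (p - 2 * (p - val x)) * p + (p - val x) * (p - val x) by nia.
    by rewrite modnMDl.
  move=> /mapP[x]; rewrite mem_iota => /andP[x1 xh] ->.
  have xp : x < p by lia.
  rewrite ltn_pmod ?andbT; last lia.
  apply/andP; split.
    rewrite -lt0n lt0n; apply/negP => /eqP e.
    have : p %| x * x by rewrite /dvdn e.
    by rewrite Euclid_dvdM // orbb (negbTE (smalldvd _ _)) //; lia.
  by apply/existsP; exists (Ordinal xp); rewrite /= modn_mod.
Qed.

Lemma card_count (T : finType) (P : pred T) : #|[set w | P w]| = count P (enum T).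
Proof. rewrite cardE -size_filter; apply: perm_size; apply: uniq_perm.
- exact: enum_uniq.
- by rewrite filter_uniq // enum_uniq.
- by move=> x; rewrite mem_enum mem_filter mem_enum inE andbT.
Qed.

Lemma smalldvd p z : 0 < z < p -> ~~ (p %| z).
Proof. move=> /andP[z0 zp]; apply/negP => /dvdn_leq; move/(_ z0); lia. Qed.

Lemma legendre_mod s p : legendre s p = legendre (s %% p) p.
Proof. by rewrite /legendre /is_qr modn_mod. Qed.

Theorem mainTheorem4 (p q : nat) (k : int) (T : finType) (f : T -> nat) :
  prime p -> odd p -> (k = 1%R \/ k = (-1)%R) -> 0 < q ->
  is_labelling (q * p) f ->
  is_min_degree (legendre_adj f p k) (q * ((p - 1) %/ 2) - 1) /\
  is_max_degree (legendre_adj f p k) (q * ((p - 1) %/ 2)).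
Proof.
move=> pp op hk q0 [cT [finj frange]].
have p1 : 1 < p by apply: prime_gt1.
have p0 : 0 < p by lia.
have qcnt := @qr_count p pp op.
set h := (p - 1) %/ 2 in qcnt *.
have ph : p = 2 * h + 1.
  have e := odd_double_half p; rewrite op -muln2 /= in e.
  by rewrite /h -e subn1 /= mulnK // addnC mulnC.
have h1 : 0 < h.
  case: (posnP h) => // h0; move: ph; rewrite h0 => ph; move: pp; rewrite ph.
  by [].
pose Pm r := (r != 0) && (legendre r p == k).
have cntP : count Pm (iota 0 p) = h.
  case: hk => hk.
    rewrite -qcnt; apply: eq_count => r; rewrite /Pm hk /legendre.
    by case: (is_qr r p).
  have c0 : count (fun r => r != 0) (iota 0 p) = p - 1.
    have -> : p = 1 + (p - 1) by lia.
    rewrite iotaD count_cat /= add0n.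
    rewrite (@eq_in_count _ _ predT); first by rewrite count_predT size_iota; lia.
    by move=> r; rewrite mem_iota => /andP[r1 _]; rewrite /= -lt0n.
  have := count_split (fun r => r != 0) (fun r => is_qr r p) (iota 0 p).
  rewrite qcnt c0 => e.
  have -> : count Pm (iota 0 p) = count (fun r => (r != 0) && ~~ is_qr r p) (iota 0 p).
    apply: eq_count => r; rewrite /Pm hk /legendre.
    by case: (is_qr r p).
  apply/eqP; rewrite -(eqn_add2l h) e; apply/eqP; lia.
have adjE : forall v w, legendre_adj f p k v w = (f w != f v) && Pm ((f v + f w) %% p).
  move=> v w; rewrite /legendre_adj /Pm (inj_eq finj) eq_sym /dvdn -legendre_mod.
  by [].
have fperm : perm_eq (map f (enum T)) (iota 1 (q * p)).
  apply: uniq_perm.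
  - by rewrite map_inj_uniq // enum_uniq.
  - exact: iota_uniq.
  apply: (uniq_min_size _ _ _).2.
  - by rewrite map_inj_uniq // enum_uniq.
  - move=> b /mapP[w _ ->]; rewrite mem_iota; have := frange w; lia.
  - by rewrite size_map size_iota -cT cardE.
have fsurj : forall b, 1 <= b <= q * p -> exists w, f w = b.
  move=> b hb; have : b \in map f (enum T) by rewrite (perm_mem fperm) mem_iota; lia.
  by move=> /mapP[w _ ->]; exists w.
have degE : forall v, degree (legendre_adj f p k) v + Pm ((f v + f v) %% p) = q * h.
  move=> v; rewrite /degree card_count.
  rewrite (eq_count (adjE v)).
  rewrite -(count_map f (fun b => (b != f v) && Pm ((f v + b) %% p))).
  rewrite (permP fperm).
  have := @count_drop1 (fun b => Pm ((f v + b) %% p)) (f v) _ (iota_uniq 1 (q * p)).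
  have -> : f v \in iota 1 (q * p) by rewrite mem_iota; have := frange v; lia.
  rewrite andbT count_shift_mod // cntP.
  by [].
split; split.
- have : has Pm (iota 0 p) by rewrite has_count cntP.
  move=> /hasP[r]; rewrite mem_iota add0n => /andP[_ rp] Pr.
  have r0 : 0 < r by move: Pr; rewrite /Pm lt0n => /andP[].
  set a0 := (r * (h + 1)) %% p.
  have a0n : a0 != 0.
    rewrite /a0 -/(dvdn p _) Euclid_dvdM // negb_or.
    by rewrite !smalldvd //; lia.
  have a0p : a0 < p by rewrite ltn_pmod.
  have [w fw] : exists w, f w = a0.
    apply: fsurj; have : 1 <= q by []; move: a0n; rewrite -lt0n; nia.
  exists w; have := degE w.
  have -> : (f w + f w) %% p = r.
    rewrite fw /a0 modnDm.
    have -> : r * (h + 1) + r * (h + 1) = r * p + r by nia.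
    by rewrite modnMDl modn_small.
  rewrite Pr; lia.
- move=> v; have := degE v; lia.
- have [w fw] : exists w, f w = p by apply: fsurj; nia.
  exists w; have := degE w.
  have -> : (f w + f w) %% p = 0 by rewrite fw modnDl modnn.
  rewrite /Pm eqxx /=; lia.
- move=> v; have := degE v; lia.
Qed.
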